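(* Let $\mathcal{R}$ be a set of nontrivial rules on a finite set $Q$, and let $\mathcal{C}=\{(A\cup\{q\},q): (A,q)\in\mathcal{R}\}$. Then $\mathcal{A}(\mathcal{R})=\mathcal{L}(\mathcal{C})$.
   Context: A rule on $Q$ is a pair $(A,q)$ with $A\subseteq Q$, $q\in Q$; it is nontrivial if $q\notin A$. It accepts $X\subseteq Q$ if $q\in X$ implies $X\cap A\neq\emptyset$. $\mathcal{K}(\mathcal{R})$ is the family of subsets of $Q$ accepted by all rules of $\mathcal{R}$, and $\mathcal{A}(\mathcal{R})$ is the family of $K\in\mathcal{K}(\mathcal{R})$ for which there is a sequence $\emptyset=Y_0\subseteq Y_1\subseteq\dots\subseteq Y_k=K$ of members of $\mathcal{K}(\mathcal{R})$ with $|Y_{i+1}\setminus Y_i|=1$ for all $i$. A rooted set is a pair $(C,r)$ with $C\subseteq Q$ and $r\in C$. For a family $\mathcal{C}$ of rooted sets, $\mathcal{L}(\mathcal{C})$ is the family of subsets $X\subseteq Q$ admitting an ordering $x_1,\dots,x_k$ of the elements of $X$ such that for each $i$, whenever $(C,x_i)\in\mathcal{C}$ one has $C\cap\{x_1,\dots,x_{i-1}\}\neq\emptyset$. *)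

(* Defs.v *)
From mathcomp Require Import all_boot all_order.
Set Implicit Arguments. Unset Strict Implicit. Unset Printing Implicit Defensive.

Definition rule (Q : finType) := ({set Q} * Q)%type.

Definition nontrivial (Q : finType) (r : rule Q) : bool := r.2 \notin r.1.

Definition accepts (Q : finType) (r : rule Q) (X : {set Q}) : bool :=
  (r.2 \in X) ==> (X :&: r.1 != set0).

Definition Kfam (Q : finType) (R : {set rule Q}) : {set {set Q}} :=
  [set X : {set Q} | [forall r in R, accepts r X]].

(* A(R): members K of K(R) reachable from the empty set by a chain
   Y_0 = set0 ⊆ Y_1 ⊆ ... ⊆ Y_k = K of members of K(R), each step adding
   exactly one element. The chain is the list [Y_0; ...; Y_k]. *)
Definition accessible_chain (Q : finType) (R : {set rule Q}) (K : {set Q})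
    (Ys : seq {set Q}) : Prop :=
  [/\ head set0 Ys = set0, last set0 Ys = K, Ys != [::],
      all (fun Y => Y \in Kfam R) Ys &
      path (fun Y Y' : {set Q} => (Y \subset Y') && (#|Y' :\: Y| == 1)) (head set0 Ys) (behead Ys)].

Definition in_A (Q : finType) (R : {set rule Q}) (K : {set Q}) : Prop :=
  K \in Kfam R /\ exists Ys, accessible_chain R K Ys.

Definition rooted (Q : finType) (c : {set Q} * Q) : bool := c.2 \in c.1.

(* L(C): sets X admitting an ordering x_1..x_k (a duplicate-free list
   enumerating X) such that for each i, every (C, x_i) in C meets
   {x_1, ..., x_{i-1}}. *)
Definition good_ordering (Q : finType) (Cf : {set {set Q} * Q}) (s : seq Q) : Prop :=
  forall i, i < size s ->
    forall c, c \in Cf -> c.2 = nth c.2 s i ->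
      c.1 :&: [set x in take i s] != set0.

Definition in_L (Q : finType) (Cf : {set {set Q} * Q}) (X : {set Q}) : Prop :=
  exists s : seq Q, [/\ uniq s, [set x in s] = X & good_ordering Cf s].

Definition C_of (Q : finType) (R : {set rule Q}) : {set {set Q} * Q} :=
  [set (r.1 :|: [set r.2], r.2) | r in R].

(* Main.v *)
Require Import Defs.
From mathcomp Require Import all_boot all_order.

Set Implicit Arguments. Unset Strict Implicit. Unset Printing Implicit Defensive.

Lemma nth_notin_take (Q : finType) (s : seq Q) i x0 :
  uniq s -> i < size s -> nth x0 s i \notin take i s.
Proof.
move=> us lt.
have hd : nth x0 s i \in drop i s.
  have -> : nth x0 s i = nth x0 (drop i s) 0 by rewrite nth_drop addn0.
  by apply: mem_nth; rewrite size_drop subn_gt0.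
move: us; rewrite -{1}(cat_take_drop i s) cat_uniq => /and3P [_ /hasPn H _].
exact: H.
Qed.

Lemma set_rcons (Q : finType) (s : seq Q) x :
  [set z in rcons s x] = x |: [set z in s].
Proof. by apply/setP => z; rewrite !inE mem_rcons in_cons. Qed.

Lemma goodK (Q : finType) (R : {set rule Q}) (s : seq Q) :
  uniq s -> good_ordering (C_of R) s -> [set x in s] \in Kfam R.
Proof.
move=> us g; rewrite /Kfam inE; apply/forallP => r; apply/implyP => rR.
rewrite /accepts; apply/implyP; rewrite inE => rs.
set j := index r.2 s.
have js : j < size s by rewrite index_mem.
have cC : (r.1 :|: [set r.2], r.2) \in C_of R by apply/imsetP; exists r.
have := g j js _ cC; rewrite /= nth_index // => /(_ erefl) /set0Pn [y].
rewrite !inE => /andP [/orP [yA | /eqP yq] yt].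
  apply/set0Pn; exists y; rewrite !inE yA andbT; exact: mem_take yt.
have := nth_notin_take r.2 us js; rewrite nth_index // -yq yt //.
Qed.

Lemma good_rcons (Q : finType) (Cf : {set {set Q} * Q}) s x :
  good_ordering Cf (rcons s x) -> good_ordering Cf s.
Proof.
move=> g i lt c cC e.
have lt' : i < size (rcons s x) by rewrite size_rcons ltnS (ltnW lt).
move: (g i lt' c cC); rewrite nth_rcons lt -cats1 takel_cat ?(ltnW lt) //.
by move=> H; apply: H.
Qed.

Lemma L_to_A (Q : finType) (R : {set rule Q}) (s : seq Q) :
  uniq s -> good_ordering (C_of R) s ->
  exists Ys, accessible_chain R [set x in s] Ys.
Proof.
elim/last_ind: s => [|s x IH] us g.
  exists [:: set0]; split => //=; rewrite andbT /Kfam inE; apply/forallP => r.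
  by apply/implyP => _; rewrite /accepts inE.
have us' : uniq s by move: us; rewrite rcons_uniq => /andP [].
have xs : x \notin s by move: us; rewrite rcons_uniq => /andP [].
have g' := good_rcons g.
have [[|Y0 t] [h l ne a p]] := IH us' g' => //.
exists (Y0 :: rcons t [set z in rcons s x]); split => //=.
- by rewrite last_rcons.
- move: a => /= /andP [-> a]; rewrite all_rcons a goodK //.
- rewrite rcons_path; move: p => /= -> /=; move: l => /= ->; rewrite set_rcons subsetUr /=.
  have -> : (x |: [set z in s]) :\: [set z in s] = [set x].
    apply/setP => z; rewrite !inE; case: eqP => [->|_] //=; rewrite ?andNb ?andbT //.
  by rewrite cards1.
Qed.

Lemma A_to_L (Q : finType) (R : {set rule Q}) :
  (forall r, r \in R -> nontrivial r) ->
  forall t : seq {set Q},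
  path (fun Y Y' : {set Q} => (Y \subset Y') && (#|Y' :\: Y| == 1)) set0 t ->
  all (fun Y => Y \in Kfam R) t ->
  in_L (C_of R) (last set0 t).
Proof.
move=> nt; elim/last_ind => [|t Y' IH].
  move=> _ _; exists [::]; split => //; by apply/setP => z; rewrite !inE.
rewrite rcons_path all_rcons last_rcons => /andP [p /andP [sub /cards1P [x ex]]].
move=> /andP [KY' a].
have [s [us es g]] := IH p a.
set Y := last set0 t in sub ex es *.
have xD : x \in Y' :\: Y by rewrite ex inE.
have xY' : x \in Y' by move: xD; rewrite inE => /andP [].
have xY : x \notin Y by move: xD; rewrite inE => /andP [].
exists (rcons s x); split.
- by rewrite rcons_uniq us andbT -es inE in xY *.
- rewrite set_rcons es; apply/setP => z; rewrite !inE.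
  case: (z =P x) => [->|nzx] /=; first by rewrite xY'.
  apply/idP/idP => [zY | zY']; first exact: (subsetP sub).
  apply/negPn/negP => zY; have : z \in Y' :\: Y by rewrite inE zY zY'.
  by rewrite ex inE => /eqP.
- move=> i lt c cC e.
  move: lt; rewrite size_rcons ltnS leq_eqVlt => /orP [/eqP iE | lt].
    move: e; rewrite nth_rcons iE ltnn eqxx => cx.
    rewrite -cats1 takel_cat // take_size.
    move/imsetP: cC => [r rR cE]; rewrite cE /= in cx *.
    move: KY'; rewrite /Kfam inE => /forallP /(_ r); rewrite rR /= /accepts cx xY' /=.
    move=> /set0Pn [y]; rewrite !inE => /andP [yY' yA].
    apply/set0Pn; exists y; rewrite !inE yA /=.
    have ny : y != r.2 by apply: contraNneq (nt r rR) => <-.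
    apply/negPn/negP => yn.
    have : y \in Y' :\: Y by rewrite inE -es inE yn yY'.
    by rewrite ex inE -cx (negbTE ny).
  move: e; rewrite nth_rcons lt -cats1 takel_cat ?(ltnW lt) // => e.
  exact: g i lt c cC e.
Qed.

Theorem theorem2p4 (Q : finType) (R : {set rule Q}) :
  (forall r, r \in R -> nontrivial r) ->
  forall X : {set Q}, in_A R X <-> in_L (C_of R) X.
Proof.
move=> nt X; split.
  move=> [KX [[|Y0 t] [h l ne a p]]] //.
  rewrite /= in h l a p; subst Y0.
  move: a => /andP [_ a]; rewrite -l; exact: A_to_L.
move=> [s [us <- g]]; split; first exact: goodK.
exact: L_to_A.
Qed.
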